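(* Let $q$ be a prime power, $m\ge 1$, and let $\mathcal{C}$ be an $[n,k]$ linear code over $\mathbb{F}_{q^m}$. The generalized subfield subcodes of $\mathcal{C}$ (over all choices of the basis $\mathcal{B}$, of $u\in\{1,\dots,m\}^n$, of $f\in GL_q(m)^n$ and of the block permutation $\pi$) are exactly the codes $\mathcal{C}P\cap\mathbb{F}_q^n$, where $P$ ranges over all $n\times n$ monomial matrices over $\mathbb{F}_{q^m}$ (i.e. exactly the subfield subcodes over $\mathbb{F}_q$ of the codes equivalent to $\mathcal{C}$ under $\mathbb{F}_{q^m}$-linear Hamming isometries).
   Context: A monomial matrix is a square matrix with exactly one nonzero entry in each row and each column; $\mathcal{C}P=\{cP: c\in\mathcal{C}\}$. For a basis $\mathcal{B}=(b_1,\dots,b_m)$ of $\mathbb{F}_{q^m}$ over $\mathbb{F}_q$, let $\phi_{\mathcal{B}}:\mathbb{F}_{q^m}\to\mathbb{F}_q^m$ send $\sum_i x_ib_i$ to $(x_1,\dots,x_m)$, and $\Phi_{\mathcal{B}}(c_1,\dots,c_n)=(\phi_{\mathcal{B}}(c_1)|\cdots|\phi_{\mathcal{B}}(c_n))\in(\mathbb{F}_q^m)^n=\mathbb{F}_q^{nm}$; the $q$-ary image is $Im_q(\mathcal{C})=\Phi_{\mathcal{B}}(\mathcal{C})$. $GL_q(m)$ is the group of $\mathbb{F}_q$-linear automorphisms of $\mathbb{F}_q^m$. For $f=(f_1,\dots,f_n)\in GL_q(m)^n$ and a permutation $\pi$ of $\{1,\dots,n\}$, $mon=\pi\circ f$ acts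 on $(x_1|\cdots|x_n)\in(\mathbb{F}_q^m)^n$ by replacing each block $x_i$ by $f_i(x_i)$ and then permuting the $n$ blocks according to $\pi$. For $u=(u_1,\dots,u_n)\in\{1,\dots,m\}^n$ and an $\mathbb{F}_q$-linear code $D\subseteq(\mathbb{F}_q^m)^n$, writing $x_{j,l}$ for the $l$-th coordinate of the $j$-th block of $x$, let $S_u(D)=\{(x_{1,u_1},\dots,x_{n,u_n}) : x\in D,\ x_{j,l}=0 \text{ for all } j \text{ and all } l\neq u_j\}\subseteq\mathbb{F}_q^n$ (shortening on all positions other than the $u_j$-th of each block). The generalized subfield subcode of $\mathcal{C}$ relative to $\mathcal{B},u,mon$ is $GSS(\mathcal{C})=S_u(mon(Im_q(\mathcal{C})))$. *)

(* Defs.v *)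
From HB Require Import structures.
From mathcomp Require Import all_boot all_order all_algebra all_fingroup all_field.
Set Implicit Arguments. Unset Strict Implicit. Unset Printing Implicit Defensive.
Import GRing.Theory.
Local Open Scope ring_scope.

Definition monomial_mx (K : fieldType) (n : nat) (P : 'M[K]_n) : bool :=
  [forall i, #|[set j | P i j != 0]| == 1%N] &&
  [forall j, #|[set i | P i j != 0]| == 1%N].

(* q-ary image Phi_B(c): row j of the n x m matrix is phi_B(c_j), i.e. the
   coordinates of c_j in the F-basis B of L. Entry (j,l) is x_{j,l}. *)
Definition qimage (F : finFieldType) (L : fieldExtType F) (m : nat)
  (B : m.-tuple L) (n : nat) (c : 'rV[L]_n) : 'M[F]_(n, m) :=
  \matrix_(j, l) coord B l (c ord0 j).

(* mon = pi o f with f = (f_1,...,f_n) in GL_q(m)^n, f_i(v) = v *m A i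
   (A i invertible); block i is replaced by f_i(x_i) and moved to position
   pi i, i.e. new block j is f_{pi^-1 j}(x_{pi^-1 j}). *)
Definition mon_act (F : fieldType) (n m : nat) (pi : 'S_n)
  (A : 'I_n -> 'M[F]_m) (x : 'M[F]_(n, m)) : 'M[F]_(n, m) :=
  \matrix_(j, l) (row ((pi^-1)%g j) x *m A ((pi^-1)%g j)) ord0 l.

Definition GSS (F : finFieldType) (L : fieldExtType F) (n : nat)
  (C : {vspace 'rV[L]_n}) (m : nat) (B : m.-tuple L) (u : 'I_n -> 'I_m)
  (pi : 'S_n) (A : 'I_n -> 'M[F]_m) : 'rV[F]_n -> Prop :=
  fun y => exists c : 'rV[L]_n, c \in C /\
    let x := mon_act pi A (qimage B c) in
    (forall (j : 'I_n) (l : 'I_m), l != u j -> x j l = 0) /\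
    y = \row_j x j (u j).

Definition SSC (F : finFieldType) (L : fieldExtType F) (n : nat)
  (C : {vspace 'rV[L]_n}) (P : 'M[L]_n) : 'rV[F]_n -> Prop :=
  fun y => exists c : 'rV[L]_n, c \in C /\ c *m P = map_mx (in_alg L) y.

(* Main.v *)
Require Import Defs.
From HB Require Import structures.
From mathcomp Require Import all_boot all_order all_algebra all_fingroup all_field.
Import GRing.Theory.
Local Open Scope ring_scope.

Section Helpers.
Variables (F : finFieldType) (L : fieldExtType F) (m : nat).
Variable (B : m.-tuple L).
Hypothesis hB : basis_of fullv B.

Definition rv (c : L) : 'rV[F]_m := \row_l coord B l c.
Definition rinv (w : 'rV[F]_m) : L := \sum_l w ord0 l *: B`_l.

Lemma rvK c : rinv (rv c) = c.
Proof.
rewrite /rinv [RHS](coord_basis hB (memvf c)).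
by apply: eq_bigr => l _; rewrite mxE.
Qed.

Lemma rinvK w : rv (rinv w) = w.
Proof.
apply/rowP => l; rewrite mxE /rinv coord_sum_free ?(basis_free hB) //.
Qed.

Lemma rvZ (t : F) c : rv (t *: c) = t *: rv c.
Proof. by apply/rowP => l; rewrite !mxE linearZ. Qed.

Lemma rv_inj : injective rv.
Proof. by move=> a b e; rewrite -(rvK a) -(rvK b) e. Qed.

Lemma qimage_row n (c : 'rV[L]_n) i : row i (qimage B c) = rv (c ord0 i).
Proof. by apply/rowP => l; rewrite !mxE. Qed.

Lemma mon_actE n pi (A : 'I_n -> 'M[F]_m) c j :
  row j (mon_act pi A (qimage B c)) =
  rv (c ord0 ((pi^-1)%g j)) *m A ((pi^-1)%g j).
Proof. by apply/rowP => l; rewrite !mxE -qimage_row. Qed.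

Lemma key (A : 'M[F]_m) (hA : A \in unitmx) (b c : L) (l : 'I_m) (t : F)
  (hb : rv b *m A = delta_mx ord0 l) :
  (rv c *m A = t *: delta_mx ord0 l) <-> c = t *: b.
Proof.
split; last by move=> ->; rewrite rvZ -scalemxAl hb.
move=> h; apply: rv_inj; rewrite rvZ.
have: rv c *m A *m invmx A = t *: (rv b *m A) *m invmx A by rewrite h hb.
by rewrite -scalemxAl !mulmxK.
Qed.

Lemma delta_neq0 (l : 'I_m) : (delta_mx (ord0 : 'I_1) l : 'rV[F]_m) != 0.
Proof. by apply/eqP => /matrixP /(_ ord0 l); rewrite !mxE !eqxx /= => /eqP; rewrite oner_eq0. Qed.

Lemma rv0 : rv 0 = 0.
Proof. by apply/rowP => l; rewrite !mxE linear0. Qed.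

Lemma core n (C : {vspace 'rV[L]_n}) (u : 'I_n -> 'I_m) (pi : 'S_n)
  (A : 'I_n -> 'M[F]_m) (hA : forall i, A i \in unitmx) (b : 'I_n -> L)
  (hb : forall i, rv (b i) *m A i = delta_mx ord0 (u (pi i)))
  (P : 'M[L]_n) (hP : forall i j, P i j = if j == pi i then (b i)^-1 else 0) y :
  GSS C B u pi A y <-> SSC C P y.
Proof.
have bnz i : b i != 0.
  apply/eqP => e; have := hb i; rewrite e rv0 mul0mx => /esym/eqP.
  by rewrite (negbTE (delta_neq0 _)).
have sumP (c : 'rV[L]_n) j : (c *m P) ord0 j = c ord0 ((pi^-1)%g j) * (b ((pi^-1)%g j))^-1.
  rewrite mxE (bigD1 ((pi^-1)%g j)) //= big1 ?addr0; first by rewrite hP permKV eqxx.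
  move=> i hi; rewrite hP; case: eqP => [e|_]; last by rewrite mulr0.
  by move: hi; rewrite e permK eqxx.
split.
- case=> c [cC [Hz ->]]; exists c; split => //.
  apply/rowP => j; rewrite sumP !mxE.
  have hrowM : forall M : 'M[F]_(n, m), (forall l, l != u j -> M j l = 0) ->
      row j M = M j (u j) *: delta_mx ord0 (u j).
    move=> M hM; apply/rowP => l; rewrite !mxE eqxx /=; case: eqP => [->|/eqP ne]; first by rewrite mulr1.
    by rewrite mulr0 hM.
  have hrow := hrowM _ (Hz j).
  rewrite mon_actE in hrow.
  have := hb ((pi^-1)%g j); rewrite permKV => hbj.
  move/(key _ (hA _) _ _ _ _ hbj): hrow => ->.
  by rewrite -scalerAl mulfV // !mxE.
- case=> c [cC hc]; exists c; split => //.
  have hci i : c ord0 i = y ord0 (pi i) *: b i.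
    have := congr1 (fun M : 'M[L]_(1,n) => M ord0 (pi i)) hc; rewrite /= sumP permK !mxE => e.
    by rewrite -[c ord0 i](mulfVK (bnz i)) e /= mulr_algl.
  set x := mon_act pi A (qimage B c).
  have hrow j : row j x = y ord0 j *: delta_mx ord0 (u j).
    rewrite /x mon_actE; have := hb ((pi^-1)%g j); rewrite permKV => hbj.
    apply/(key _ (hA _) _ _ _ _ hbj); by rewrite hci permKV.
  clearbody x.
  have xE j l : x j l = y ord0 j * (l == u j)%:R.
    by have := congr1 (fun M : 'M[F]_(1,m) => M ord0 l) (hrow j); rewrite !mxE.
  rewrite /=; split.
  + by move=> j l hl; rewrite xE (negbTE hl) mulr0.
  + by apply/rowP => j; rewrite !mxE xE eqxx mulr1.
Qed.
End Helpers.

Lemma b_nz (F : finFieldType) (L : fieldExtType F) m (B : m.-tuple L) b (A : 'M[F]_m) l :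
  @rv F L m B b *m A = delta_mx ord0 l -> b != 0.
Proof.
move=> h; apply/eqP => e; move: h; rewrite e rv0 mul0mx => /esym/eqP.
by rewrite (negbTE (delta_neq0 _ _ _)).
Qed.

Lemma monoP (L : fieldType) n (pi : 'S_n) (d : 'I_n -> L) (hd : forall i, d i != 0) :
  monomial_mx (\matrix_(i, j) if j == pi i then d i else 0).
Proof.
apply/andP; split; apply/forallP => i.
  have -> : [set j | (\matrix_(i, j) if j == pi i then d i else 0) i j != 0] = [set pi i].
    apply/setP => j; rewrite !inE mxE; by case: (j == pi i); rewrite ?hd ?eqxx.
  by rewrite cards1.
have -> : [set j | (\matrix_(i, j) if j == pi i then d i else 0) j i != 0] = [set (pi^-1)%g i].
  apply/setP => j; rewrite !inE mxE.
  have -> : (i == pi j) = (j == (pi^-1)%g i).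
    by apply/eqP/eqP => [->|->]; rewrite ?permK ?permKV.
  by case: ifP => [/eqP ->|_]; rewrite ?hd ?eqxx.
by rewrite cards1.
Qed.

Lemma ext_row (F : fieldType) m (hm0 : (0 < m)%N) (v : 'rV[F]_m) : v != 0 ->
  exists A : 'M[F]_m, A \in unitmx /\ v *m A = delta_mx ord0 (Ordinal hm0).
Proof.
move=> vnz.
have e := mulmx_ebase v; rewrite rank_rV vnz in e.
set a := col_ebase v in e; set R := row_ebase v in e.
have hR : R \in unitmx by apply: row_ebase_unit.
have ha : a 0 0 != 0.
  have := col_ebase_unit v; rewrite -/a unitmxE det_mx11 unitfE //.
exists ((a 0 0)^-1 *: invmx R); split.
  by rewrite unitmxZ ?unitfE ?invr_eq0 // unitmx_inv.
rewrite -scalemxAr -e mulmxK // {2}[a]mx11_scalar mul_scalar_mx scalerA mulVf // scale1r.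
apply/matrixP => i j; rewrite !mxE (ord1 i) /= andbT -val_eqE /= eq_sym //.
Qed.

Arguments rv {F L m} B c.
Arguments rinv {F L m} B w.
Arguments rinvK {F L m B} hB w.
Arguments rvK {F L m B} hB c.
Arguments rv0 {F L m} B.
Arguments core {F L m B} hB {n} C u pi A hA b hb P hP y.
Arguments b_nz {F L m B b A l} _.
Arguments ext_row {F m} hm0 {v} _.

Theorem theorem4 (F : finFieldType) (L : fieldExtType F) (m : nat)
  (hm : \dim (fullv : {vspace L}) = m) (n k : nat)
  (C : {vspace 'rV[L]_n}) (hk : \dim C = k) :
  (forall (B : m.-tuple L) (u : 'I_n -> 'I_m) (A : 'I_n -> 'M[F]_m)
          (pi : 'S_n),
     basis_of fullv B -> (forall i, A i \in unitmx) ->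
     exists P : 'M[L]_n, monomial_mx P /\
       (forall y, GSS C B u pi A y <-> SSC C P y)) /\
  (forall P : 'M[L]_n, monomial_mx P ->
     exists (B : m.-tuple L) (u : 'I_n -> 'I_m) (A : 'I_n -> 'M[F]_m)
            (pi : 'S_n),
       basis_of fullv B /\ (forall i, A i \in unitmx) /\
       (forall y, GSS C B u pi A y <-> SSC C P y)).
Proof.
split.
- move=> B u A pi hB hA.
  pose b i := rinv B (delta_mx ord0 (u (pi i)) *m invmx (A i)).
  have hb i : rv B (b i) *m A i = delta_mx ord0 (u (pi i)).
    by rewrite rinvK // mulmxKV.
  exists (\matrix_(i, j) if j == pi i then (b i)^-1 else 0); split.
    by apply: monoP => i; rewrite invr_eq0 (b_nz (hb i)).
  by move=> y; apply: core => // i j; rewrite mxE.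
- move=> P /andP [/forallP hr /forallP hc].
  have hs i : exists j, [set j0 | P i j0 != 0] == [set j].
    by move/cards1P: (hr i) => [j hj]; exists j; apply/eqP.
  pose s i := xchoose (hs i).
  have Ps i j : (P i j != 0) = (j == s i).
    have /eqP e := xchooseP (hs i).
    by move/setP: e => /(_ j); rewrite !inE.
  have s_inj : injective s.
    move=> i i' e; move/cards1P: (hc (s i)) => [k0 hk0].
    have h1 : i \in [set i0 | P i0 (s i) != 0] by rewrite inE Ps.
    have h2 : i' \in [set i0 | P i0 (s i) != 0] by rewrite inE Ps e.
    by move: h1 h2; rewrite hk0 !inE => /eqP -> /eqP ->.
  pose sg := perm s_inj.
  have hm0 : (0 < m)%N.
    rewrite -hm lt0n dimv_eq0; apply/negP => /eqP e0.
    by have := memvf (1 : L); rewrite e0 memv0 oner_eq0.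
  pose B := tcast hm (vbasis fullv).
  have hB : basis_of fullv B by rewrite /B val_tcast; apply: vbasisP.
  pose b i := (P i (sg i))^-1.
  have vnz i : rv B (b i) != 0.
    apply/eqP => e; have h0 := rvK hB 0; rewrite rv0 in h0.
    have := rvK hB (b i); rewrite e h0 => /esym/eqP; rewrite invr_eq0 => /eqP h.
    by have := Ps i (sg i); rewrite h eqxx permE eqxx.
  have hA i : exists A : 'M[F]_m, (A \in unitmx) && (rv B (b i) *m A == delta_mx ord0 (Ordinal hm0)).
    have [A [h1 h2]] := ext_row hm0 (vnz i); exists A; by rewrite h1 h2 eqxx.
  pose A i := xchoose (hA i).
  have hAu i : A i \in unitmx by have /andP [] := xchooseP (hA i).
  have hAb i : rv B (b i) *m A i = delta_mx ord0 (Ordinal hm0).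
    by have /andP [_ /eqP] := xchooseP (hA i).
  exists B, (fun _ => Ordinal hm0), A, sg; split => //; split => //.
  move=> y; apply: core => // i j.
  rewrite /b invrK; case: eqP => [->//|/eqP ne].
  by apply/eqP; apply: contraNT ne; rewrite Ps permE.
Qed.
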